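(* Let $h$ be the unique function on pairs of disjoint subsets of $\{1,\dots,n\}$ satisfying \[ h(\emptyset,J)=\delta_{\emptyset,J},\qquad h(I,J)=e^{2b_{\iota(I)}}\sum_{K\subset J}\Bigl(\prod_{i\in K}|\zeta_{i,\iota(I)}|\Bigr)h(I'\cup K,J\setminus K)\quad\text{if }I\ne\emptyset, \] with $I'=I\setminus\{\iota(I)\}$. Then $|g(I,J)|\le h(I,J)$ for all disjoint $I,J\subset\{1,\dots,n\}$, where $g(I,J)=(\Psi^{*(-1)}*D_I\Psi)(J)$.
   Context: Fix $n\ge1$, real numbers $b_1,\dots,b_n\ge0$ and complex numbers $\zeta_{ij}=\zeta_{ji}$ such that $\prod_{i,j\in I,i<j}|1+\zeta_{ij}|\le\prod_{i\in I}e^{b_i}$ for every $I\subset\{1,\dots,n\}$. Let $\mathcal{A}$ be the set of complex functions on the power set of $\{1,\dots,n\}$, with product $f*g(I)=\sum_{J\subset I}f(J)g(I\setminus J)$, unit $1_{\mathcal A}(I)=\delta_{I,\emptyset}$; any $f$ with $f(\emptyset)\ne0$ has a unique $*$-inverse $f^{*(-1)}$. $D_If(J)=f(I\cup J)$ if $I\cap J=\emptyset$, $0$ otherwise. $\Psi(I)=\prod_{i,j\in I,i<j}(1+\zeta_{ij})$. $\iota$ assigns to each nonempty $I$ an element $\iota(I)\in I$ with $\prod_{j\in I\setminus\{\iota(I)\}}|1+\zeta_{j,\iota(I)}|\le e^{2b_{\iota(I)}}$. Empty sums are $0$, empty products are $1$. *)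

(* Defs.v *)
From HB Require Import structures.
From mathcomp Require Import all_boot all_order all_algebra.
Set Implicit Arguments. Unset Strict Implicit. Unset Printing Implicit Defensive.
Import Order.TTheory GRing.Theory Num.Theory.
Local Open Scope ring_scope.

(* The algebra A of complex functions on the power set of {1..n} (indexed by 'I_n). *)
Definition setfun (C : Type) (n : nat) := {set 'I_n} -> C.

Definition sconv (C : numClosedFieldType) (n : nat) (f g : setfun C n) : setfun C n :=
  fun I => \sum_(J : {set 'I_n} | J \subset I) f J * g (I :\: J).

Definition sunit (C : numClosedFieldType) (n : nat) : setfun C n :=
  fun I => (I == set0)%:R.

Definition sD (C : numClosedFieldType) (n : nat) (I : {set 'I_n}) (f : setfun C n)
  : setfun C n :=
  fun J => if [disjoint I & J] then f (I :|: J) else 0.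

Definition Psi (C : numClosedFieldType) (n : nat) (zeta : 'I_n -> 'I_n -> C)
  : setfun C n :=
  fun I => \prod_(i in I) \prod_(j in I | (i < j)%N) (1 + zeta i j).

(* Main.v *)
Require Import Defs.
From HB Require Import structures.
From mathcomp Require Import all_boot all_order all_algebra.
Import Order.TTheory GRing.Theory Num.Theory.
Local Open Scope ring_scope.

Lemma prod1D (R : comNzRingType) (T : finType) (L : {set T}) (x : T -> R) :
  \prod_(j in L) (1 + x j) = \sum_(K : {set T} | K \subset L) \prod_(j in K) x j.
Proof.
have -> : \prod_(j in L) (1 + x j) = \prod_j ((if j \in L then x j else 0) + 1).
  rewrite big_mkcond /=; apply: eq_bigr => j _; by case: ifP => _; rewrite ?add0r // addrC.
rewrite (@bigA_distr R 0 1 *%R +%R T (fun i => if i \in L then x i else 0) (fun _ => 1)).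
rewrite [RHS]big_mkcond /=; apply: eq_bigr => K _.
case: ifP => KL.
  rewrite [RHS]big_mkcond /=; apply: eq_bigr => i _.
  case: ifP => // iK; by rewrite (subsetP KL _ iK).
have /subsetPn [i iK iL] := negbT KL.
by rewrite (bigD1 i) //= iK (negbTE iL) mul0r.
Qed.

Lemma Psi_U1 (C : numClosedFieldType) n (zeta : 'I_n -> 'I_n -> C)
  (zs : forall i j, zeta i j = zeta j i) i (S : {set 'I_n}) :
  i \notin S -> Psi zeta (i |: S) = Psi zeta S * \prod_(j in S) (1 + zeta j i).
Proof.
move=> iS; rewrite /Psi.
set f := fun a b : 'I_n => if (a < b)%N then 1 + zeta a b else 1.
have E (X : {set 'I_n}) : \prod_(a in X) \prod_(b in X | (a < b)%N) (1 + zeta a b)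
   = \prod_(a in X) \prod_(b in X) f a b.
  by apply: eq_bigr => a _; rewrite big_mkcondr.
rewrite !E big_setU1 //= (big_setU1 i) //=.
have -> : f i i = 1 by rewrite /f ltnn.
rewrite mul1r.
rewrite [X in _ * X = _](eq_bigr (fun a => f a i * \prod_(b in S) f a b)); last by move=> a _; rewrite (big_setU1 i).
rewrite big_split /= mulrCA mulrA -big_split /= [RHS]mulrC; congr (_ * _).
apply: eq_bigr => j jS.
have ji : j != i by apply: contraNneq iS => <-.
case: (ltngtP i j) => h.
- by rewrite /f h ltnNge (ltnW h) mul1r zs.
- by rewrite /f h ltnNge (ltnW h) mulr1.
- by move/val_inj: h ji => ->; rewrite eqxx.
Qed.

Lemma sD_step (C : numClosedFieldType) n (zeta : 'I_n -> 'I_n -> C)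
  (zs : forall i j, zeta i j = zeta j i) i (I L : {set 'I_n}) :
  i \in I -> [disjoint I & L] ->
  sD I (Psi zeta) L = (\prod_(j in I :\ i) (1 + zeta j i)) *
    \sum_(K : {set 'I_n} | K \subset L) (\prod_(j in K) zeta j i) * Psi zeta ((I :\ i) :|: L).
Proof.
move=> iI dIL; rewrite /sD dIL.
have -> : I :|: L = i |: ((I :\ i) :|: L) by rewrite setUA setD1K.
have iL : i \notin L by rewrite (disjointFr dIL iI).
rewrite Psi_U1 //; last by rewrite !inE eqxx /= (negbTE iL).
have dIL' : [disjoint I :\ i & L] by apply: disjointWl dIL; apply: subsetDl.
have -> : \prod_(j in (I :\ i) :|: L) (1 + zeta j i)
   = \prod_(j in [predU (I :\ i) & L]) (1 + zeta j i).
  by apply: eq_bigl => j; rewrite !inE.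
rewrite bigU // mulrC -mulrA; congr (_ * _).
by rewrite -mulr_suml -prod1D.
Qed.

Lemma g_rec (C : numClosedFieldType) n (zeta : 'I_n -> 'I_n -> C)
  (zs : forall i j, zeta i j = zeta j i) (Pinv : setfun C n) i (I J : {set 'I_n}) :
  i \in I -> [disjoint I & J] ->
  sconv Pinv (sD I (Psi zeta)) J = (\prod_(j in I :\ i) (1 + zeta j i)) *
    \sum_(K : {set 'I_n} | K \subset J) (\prod_(j in K) zeta j i) *
       sconv Pinv (sD ((I :\ i) :|: K) (Psi zeta)) (J :\: K).
Proof.
move=> iI dIJ; rewrite /sconv.
set A := \prod_(j in I :\ i) (1 + zeta j i).
rewrite (eq_bigr (fun M : {set 'I_n} => A * \sum_(K : {set 'I_n} | K \subset J :\: M)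
   Pinv M * ((\prod_(j in K) zeta j i) * Psi zeta ((I :\ i) :|: (J :\: M))))); last first.
  move=> M MJ; rewrite (@sD_step _ _ _ zs _ _ _ iI); last by apply: disjointWr dIJ; apply: subsetDl.
  by rewrite mulrCA mulr_sumr.
rewrite -mulr_sumr; congr (_ * _).
under [RHS]eq_bigr => K _ do rewrite mulr_sumr.
rewrite (exchange_big_dep (fun K : {set 'I_n} => K \subset J)) /=; last first.
  by move=> M K _ KJM; apply: subset_trans KJM (subsetDl _ _).
apply: eq_bigr => K KJ; apply: eq_big => [M | M /andP [MJ KJM]].
  by rewrite !subsetD KJ /= disjoint_sym.
have dd : [disjoint I :\ i :|: K & (J :\: K) :\: M].
  apply/pred0P => x /=; rewrite !inE; apply/negbTE/negP => /andP[/orP[/andP[_ xI]|xK] /and3P[_ xnK xJ]].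
  - by rewrite (disjointFr dIJ xI) in xJ.
  - by rewrite xK in xnK.
rewrite /sD dd.
have -> : I :\ i :|: K :|: (J :\: K) :\: M = I :\ i :|: J :\: M.
  apply/setP => x; have h1 := subsetP KJM x; rewrite !in_setU !in_setD in h1 *.
  by move: h1; case: (x \in K) => [/(_ isT)/andP[-> ->]|_] /=; rewrite ?orbT ?orbF.
by rewrite mulrCA.
Qed.

(* E i plays the role of e^{b_i} (b_i >= 0  <=>  E i real, E i >= 1). *)
Theorem mainTheorem6 (C : numClosedFieldType) (n : nat) (n_pos : (0 < n)%N)
  (E : 'I_n -> C) (E_ge1 : forall i, 1 <= E i)
  (zeta : 'I_n -> 'I_n -> C) (zeta_sym : forall i j, zeta i j = zeta j i)
  (hyp : forall I : {set 'I_n},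
     \prod_(i in I) \prod_(j in I | (i < j)%N) `|1 + zeta i j| <= \prod_(i in I) E i)
  (iota : {set 'I_n} -> 'I_n)
  (iota_in : forall I : {set 'I_n}, I != set0 -> iota I \in I)
  (iota_bound : forall I : {set 'I_n}, I != set0 ->
     \prod_(j in I :\ iota I) `|1 + zeta j (iota I)| <= E (iota I) ^+ 2)
  (Psiinv : setfun C n)
  (Psiinv_spec : sconv Psiinv (Psi zeta) = @sunit C n)
  (h : {set 'I_n} -> {set 'I_n} -> C)
  (h_empty : forall J : {set 'I_n}, h set0 J = (J == set0)%:R)
  (h_rec : forall I J : {set 'I_n}, I != set0 -> [disjoint I & J] ->
     h I J = E (iota I) ^+ 2 *
       \sum_(K : {set 'I_n} | K \subset J)
          (\prod_(i in K) `|zeta i (iota I)|) * h ((I :\ iota I) :|: K) (J :\: K)) :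
  forall I J : {set 'I_n}, [disjoint I & J] ->
    `| sconv Psiinv (sD I (Psi zeta)) J | <= h I J.
Proof.
move=> I J.
suff H : forall k (I J : {set 'I_n}), (#|I :|: J| < k)%N -> [disjoint I & J] ->
    `| sconv Psiinv (sD I (Psi zeta)) J | <= h I J by exact: (H _ I J (ltnSn _)).
elim=> [//|k IH] {}I {}J hk dIJ.
have [->|I0] := eqVneq I set0.
  have -> : sconv Psiinv (sD set0 (Psi zeta)) J = sconv Psiinv (Psi zeta) J.
    rewrite /sconv; apply: eq_bigr => M _; rewrite /sD set0U.
    have -> : [disjoint set0 & J :\: M] by apply/pred0P => x; rewrite /= inE.
    by [].
  rewrite Psiinv_spec /sunit h_empty.
  by case: (J == set0); rewrite ?normr1 ?normr0.
have iI := iota_in I I0.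
rewrite (@g_rec _ _ _ zeta_sym Psiinv _ _ _ iI dIJ) (h_rec I J I0 dIJ) normrM.
apply: ler_pM; rewrite ?normr_ge0 //.
  by rewrite normr_prod; exact: iota_bound.
apply: le_trans (ler_norm_sum _ _ _) _; apply: ler_sum => K KJ.
rewrite normrM normr_prod; apply: ler_wpM2l; first by apply: prodr_ge0 => j _; apply: normr_ge0.
have iJ : iota I \notin J by rewrite (disjointFr dIJ iI).
apply: IH.
  have sub : (I :\ iota I :|: K) :|: (J :\: K) \subset (I :|: J) :\ iota I.
    apply/subsetP => x; rewrite !inE => /orP[/orP[/andP[-> ->]//|xK]|/andP[_ xJ]].
      have xJ := subsetP KJ x xK; rewrite xJ orbT andbT.
      by apply/eqP => xi; rewrite -xi xJ in iJ.
    rewrite xJ orbT andbT.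
    by apply/eqP => xi; rewrite -xi xJ in iJ.
  apply: leq_ltn_trans (subset_leq_card sub) _.
  have hp : (#|(I :|: J) :\ iota I| < #|I :|: J|)%N by apply: proper_card; apply: properD1; rewrite inE iI.
  by apply: leq_trans hp _; rewrite -ltnS.
apply/pred0P => x /=; rewrite !inE; apply/negbTE/negP => /andP[/orP[/andP[_ xI]|xK] /andP[xnK xJ]].
- by rewrite (disjointFr dIJ xI) in xJ.
- by rewrite xK in xnK.
Qed.
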